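(* Let $(M,\circ,\mathrm{OR})$ be a free $\mathbb{D}$-module of rank 3 with scalar product and orientation. The Lie algebra $so(3,\mathbb{D})$ of $\circ$-antisymmetric $\mathbb{D}$-linear operators on $M$ (with the commutator bracket) is canonically isomorphic to the Lie algebra $(M,-\times)$ (bracket $[x,y]=-x\times y$) via $x\mapsto -x\times\cdot$, and to $se(3)$, the Lie algebra of screw fields on the Euclidean space $E$ with the Lie bracket of vector fields, via the map $\beta$ composed with this isomorphism.
   Context: $\mathbb{D}=\{a+\epsilon b: a,b\in\mathbb{R}\}$, $\epsilon^2=0$, $\mathfrak{Re},\mathfrak{Du}$ real and dual parts. Scalar product: symmetric $\mathbb{D}$-bilinear $\circ:M\times M\to\mathbb{D}$ with $\mathfrak{Re}(x\circ x)\ge0$, equality iff $x\in\epsilon M$. Orientation: one of the two classes of ordered bases, $\{b'_j=A_{jk}b_k\}\sim\{b_k\}$ iff $\det\mathfrak{Re}(A)>0$. Cross product: $x\times y=x^iy^j\epsilon_{ijk}m_k$ in any positive orthonormal basis $\{m_i\}$. $V=M/\epsilon M$ with quotient $\pi$ and inner product induced by $\mathfrak{Re}(\cdot\circ\cdot)$. $E$ is the set of real 3-dimensional subspaces $P\subset M$ with $\mathfrak{Du}(x\circ y)=0$ on $P$ and $P\cap\epsilon M=\{0\}$; it is a Euclidean affine space over $V$ with $B-A:=d^ke_k$ where $e^B_i=e^A_i+\epsilon\,\epsilon_{ijk}d^ke^A_j$, $\{e_i\}$ a positive orthonormal basis of $V$ and $e_i^P$ the unique lift of $e_i$ lying in $P$.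 A screw field on $E$ is a map $\mathcal{s}:E\to V$ with $\mathcal{s}(Q)-\mathcal{s}(P)=s\times(Q-P)$ for some $s\in V$; $\beta:M\to\{\text{screw fields}\}$ is $\beta(z)(A)=\mathcal{s}(A)$ where $z=a+\epsilon\mathcal{s}(A)$, $a\in A$. *)

(* Defs.v *)
From HB Require Import structures.
From mathcomp Require Import all_boot all_order all_algebra.
From mathcomp Require Import all_classical all_reals.
From mathcomp Require Import topology normedtype.
Set Implicit Arguments. Unset Strict Implicit. Unset Printing Implicit Defensive.
Import Order.TTheory GRing.Theory Num.Theory.
Import numFieldNormedType.Exports.
Local Open Scope ring_scope.
Local Open Scope classical_set_scope.

(* Dual numbers  D = { a + eps b : a, b in R },  eps^2 = 0.            *)
Record dual (R : Type) := Dual { re : R; du : R }.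

Definition dual_to_prod R (x : dual R) := (re x, du x).
Definition prod_to_dual R (p : R * R) := Dual p.1 p.2.
Lemma dual_prodK R : cancel (@dual_to_prod R) (@prod_to_dual R).
Proof. by case. Qed.

HB.instance Definition _ (R : choiceType) :=
  Choice.copy (dual R) (can_type (@dual_prodK R)).

Section DualRing.
Variable R : comNzRingType.
Implicit Types x y z : dual R.

Definition dzero : dual R := Dual 0 0.
Definition dopp x := Dual (- re x) (- du x).
Definition dadd x y := Dual (re x + re y) (du x + du y).
Definition done : dual R := Dual 1 0.
Definition dmul x y := Dual (re x * re y) (re x * du y + du x * re y).

Lemma daddA : associative dadd.
Proof. by move=> [? ?] [? ?] [? ?]; rewrite /dadd /= !addrA. Qed.
Lemma daddC : commutative dadd.
Proof. by move=> [? ?] [? ?]; rewrite /dadd /= [X in Dual X _]addrC [X in Dual _ X]addrC. Qed.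
Lemma dadd0 : left_id dzero dadd.
Proof. by move=> [? ?]; rewrite /dadd /= !add0r. Qed.
Lemma daddN : left_inverse dzero dopp dadd.
Proof. by move=> [? ?]; rewrite /dadd /= !addNr. Qed.

HB.instance Definition _ := GRing.isZmodule.Build (dual R) daddA daddC dadd0 daddN.

Lemma dmulA : associative dmul.
Proof.
move=> [a b] [c d] [e f]; rewrite /dmul /=; congr Dual; first by rewrite mulrA.
by rewrite !mulrDr !mulrDl !mulrA addrA.
Qed.
Lemma dmulC : commutative dmul.
Proof.
move=> [a b] [c d]; rewrite /dmul /=; congr Dual; first by rewrite mulrC.
by rewrite addrC [a * d]mulrC [b * c]mulrC.
Qed.
Lemma dmul1 : left_id done dmul.
Proof. by move=> [a b]; rewrite /dmul /= !mul1r mul0r addr0. Qed.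
Lemma dmulDl : left_distributive dmul dadd.
Proof.
move=> [a b] [c d] [e f]; rewrite /dmul /dadd /=; congr Dual; first by rewrite mulrDl.
by rewrite !mulrDl -!addrA; congr (_ + _); rewrite addrCA.
Qed.
Lemma done_neq0 : done != dzero.
Proof. by apply/eqP => -[] /eqP; rewrite oner_eq0. Qed.

HB.instance Definition _ :=
  GRing.Zmodule_isComNzRing.Build (dual R) dmulA dmulC dmul1 dmulDl done_neq0.

End DualRing.

(* Generic (classical) description operator: some x with P x if one exists,
   the default x0 otherwise.  Used only for objects the paper asserts to be
   uniquely determined. *)
Definition the (T : Type) (x0 : T) (P : T -> Prop) : T :=
  match pselect (exists x, P x) with
  | left h => projT1 (cid h)
  | right _ => x0
  end.

Section Geometry.
Variable R : realType.
Local Notation D := (dual R).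

Definition dR (r : R) : D := Dual r 0.
Definition deps : D := Dual 0 1.

(* Levi-Civita symbol epsilon_{ijk} on indices {0,1,2} *)
Definition levi (i j k : 'I_3) : R :=
  ((i%:R - j%:R) * (j%:R - k%:R) * (k%:R - i%:R)) / 2.

Variable M : lmodType D.

Definition is_basis (b : 'I_3 -> M) : Prop :=
  (forall x : M, exists c : 'I_3 -> D, x = \sum_i c i *: b i) /\
  (forall c : 'I_3 -> D, \sum_i c i *: b i = 0 -> forall i, c i = 0).

Definition free_rank3 : Prop := exists b, is_basis b.

Definition same_orientation (b b' : 'I_3 -> M) : Prop :=
  exists A : 'M[D]_3, (forall j, b' j = \sum_k A j k *: b k) /\
                      0 < \det (map_mx (@re R) A).

Definition is_orientation (OR : set ('I_3 -> M)) : Prop :=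
  exists b, is_basis b /\ OR = [set b' | is_basis b' /\ same_orientation b b'].

Definition epsM : set M := [set x | exists y, x = deps *: y].

Variable sp : M -> M -> D.

Definition is_scalar_product : Prop :=
  (forall x y, sp x y = sp y x) /\
  (forall (a : D) x y z, sp (a *: x + y) z = a * sp x z + sp y z) /\
  (forall x, 0 <= re (sp x x)) /\
  (forall x, re (sp x x) = 0 <-> epsM x).

Definition orthonormal (m : 'I_3 -> M) : Prop :=
  forall i j, sp (m i) (m j) = (i == j)%:R.

Definition pos_orthonormal (OR : set ('I_3 -> M)) (m : 'I_3 -> M) : Prop :=
  OR m /\ orthonormal m.

Definition cross (m : 'I_3 -> M) (x y : M) : M :=
  \sum_i \sum_j \sum_k (sp x (m i) * sp y (m j) * dR (levi i j k)) *: m k.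

Definition ad (m : 'I_3 -> M) (x : M) : M -> M := fun y => - cross m x y.

Definition is_so3 (f : M -> M) : Prop :=
  (forall (a : D) x y, f (a *: x + y) = a *: f x + f y) /\
  (forall x y, sp (f x) y = - sp x (f y)).

(* ---- V = M / eps M, as the set of cosets x + eps M ---- *)
Definition coset (x : M) : set M := [set y | epsM (y - x)].
Definition V := {S : set M | exists x, S = coset x}.
Definition piV (x : M) : V := exist _ (coset x) (ex_intro _ x erefl).
Definition reprV (v : V) : M := the 0 (fun x => piV x = v).

Definition vadd (u v : V) : V := piV (reprV u + reprV v).
Definition vsub (u v : V) : V := piV (reprV u - reprV v).
Definition vscale (r : R) (u : V) : V := piV (dR r *: reprV u).
Definition vdot (u v : V) : R := re (sp (reprV u) (reprV v)).
Definition vnorm (u : V) : R := Num.sqrt (vdot u u).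
Definition vcomb (c : 'I_3 -> R) (e : 'I_3 -> V) : V :=
  piV (\sum_k dR (c k) *: reprV (e k)).

Definition pos_orthonormal_V (OR : set ('I_3 -> M)) (e : 'I_3 -> V) : Prop :=
  (forall i j, vdot (e i) (e j) = (i == j)%:R) /\
  exists b, OR b /\ exists A : 'M[R]_3,
    0 < \det A /\ forall j, e j = vcomb (fun k => A j k) (fun k => piV (b k)).

Definition vcross (e : 'I_3 -> V) (u v : V) : V :=
  vcomb (fun k => \sum_i \sum_j vdot u (e i) * vdot v (e j) * levi i j k) e.

Definition real_span (p : 'I_3 -> M) : set M :=
  [set x | exists c : 'I_3 -> R, x = \sum_i dR (c i) *: p i].
Definition real_indep (p : 'I_3 -> M) : Prop :=
  forall c : 'I_3 -> R, \sum_i dR (c i) *: p i = 0 -> forall i, c i = 0.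

Definition is_point (P : set M) : Prop :=
  (exists p, real_indep p /\ P = real_span p) /\
  (forall x y, P x -> P y -> du (sp x y) = 0) /\
  (forall x, P x -> epsM x -> x = 0).

Definition E := {P : set M | is_point P}.

(* the unique lift of v in V lying in P *)
Definition liftE (P : E) (v : V) : M := the 0 (fun x => proj1_sig P x /\ piV x = v).

Definition dvec (e : 'I_3 -> V) (B A : E) : 'I_3 -> R :=
  the (fun _ => 0) (fun d => forall i,
    liftE B (e i) = liftE A (e i) +
      deps *: \sum_j \sum_k dR (levi i j k * d k) *: liftE A (e j)).
Definition diffE (e : 'I_3 -> V) (B A : E) : V := vcomb (dvec e B A) e.

Definition transl (e : 'I_3 -> V) (P : E) (v : V) : E :=
  the P (fun Q => diffE e Q P = v).

Definition is_screw (e : 'I_3 -> V) (s : E -> V) : Prop :=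
  exists r : V, forall P Q, vsub (s Q) (s P) = vcross e r (diffE e Q P).

Definition vderiv (e : 'I_3 -> V) (Y : E -> V) (P : E) (v w : V) : Prop :=
  (fun t : R => vnorm (vsub (vsub (Y (transl e P (vscale t v))) (Y P)) (vscale t w))
                / `|t|) @ (0 : R)^' --> (0 : R).

Definition lie_bracket (e : 'I_3 -> V) (X Y Z : E -> V) : Prop :=
  forall P, exists a b, vderiv e Y P (X P) a /\ vderiv e X P (Y P) b /\ Z P = vsub a b.

Definition beta (z : M) (A : E) : V :=
  the (piV 0) (fun v => exists a x, proj1_sig A a /\ piV x = v /\ z = a + deps *: x).

End Geometry.

Arguments liftE [R M] sp P v.
Arguments dvec [R M] sp e B A.
Arguments diffE [R M] sp e B A.
Arguments transl [R M] sp e P v.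
Arguments is_screw [R M] sp e s.
Arguments vderiv [R M] sp e Y P v w.
Arguments lie_bracket [R M] sp e X Y Z.
Arguments beta [R M] sp z A.

(* Main.v *)
Require Import Defs.
From HB Require Import structures.
From mathcomp Require Import all_boot all_order all_algebra.
From mathcomp Require Import all_classical all_reals.
From mathcomp Require Import topology normedtype.
From mathcomp Require Import ring lra.
Set Implicit Arguments. Unset Strict Implicit. Unset Printing Implicit Defensive.
Import Order.TTheory GRing.Theory Num.Theory.
Import numFieldNormedType.Exports.
Local Open Scope ring_scope.
Local Open Scope classical_set_scope.

Definition o0 : 'I_3 := @Ordinal 3 0 isT.
Definition o1 : 'I_3 := @Ordinal 3 1 isT.
Definition o2 : 'I_3 := @Ordinal 3 2 isT.

Lemma sum3 (T : nmodType) (F : 'I_3 -> T) : \sum_i F i = F o0 + F o1 + F o2.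
Proof.
rewrite !big_ord_recl big_ord0 addr0 addrA.
by congr (F _ + F _ + F _); apply/val_inj.
Qed.

Lemma ord3 (i : 'I_3) : i = o0 \/ i = o1 \/ i = o2.
Proof.
case: i => [[|[|[|k]]] Hk].
- by left; apply/val_inj.
- by right; left; apply/val_inj.
- by right; right; apply/val_inj.
- by [].
Qed.

Ltac case3 i := case: (ord3 i) => [->|[->|->]].

Lemma eqoE : ((o0 == o1) = false) * ((o0 == o2) = false) * ((o1 == o0) = false)
  * ((o1 == o2) = false) * ((o2 == o0) = false) * ((o2 == o1) = false).
Proof. by []. Qed.

Lemma det3E (T : comNzRingType) (A : 'M[T]_3) : \det A =
  A o0 o0 * A o1 o1 * A o2 o2 + A o0 o1 * A o1 o2 * A o2 o0 + A o0 o2 * A o1 o0 * A o2 o1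
  - A o0 o0 * A o1 o2 * A o2 o1 - A o0 o1 * A o1 o0 * A o2 o2 - A o0 o2 * A o1 o1 * A o2 o0.
Proof.
rewrite (expand_det_row _ o0) sum3 /cofactor.
rewrite !(expand_det_row _ ord0) !big_ord_recl !big_ord0 /cofactor.
rewrite !det_mx11 !mxE /=.
have [f Hf] : exists f : nat -> nat -> T, forall i j : 'I_3, A i j = f i j.
  by exists (fun i j => A (inord i) (inord j)) => i j; rewrite !inord_val.
rewrite !Hf /= /bump /=; ring.
Qed.

Lemma sum_delta (T : pzSemiRingType) (f : 'I_3 -> T) j :
  \sum_i (i == j)%:R * f i = f j.
Proof.
rewrite (bigD1 j) //= eqxx mul1r big1 ?addr0 // => i /negbTE ->.
by rewrite mul0r.
Qed.

Lemma sum_delta' (T : pzSemiRingType) (f : 'I_3 -> T) j :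
  \sum_i (j == i)%:R * f i = f j.
Proof. by rewrite -(sum_delta f j); apply: eq_bigr => i _; rewrite eq_sym. Qed.

Lemma the_spec (T : Type) (x0 : T) (P : T -> Prop) :
  (exists x, P x) -> P (the x0 P).
Proof.
move=> h; rewrite /the; case: pselect => [h'|//].
exact: projT2 (cid h').
Qed.

Lemma the_uniq (T : Type) (x0 : T) (P : T -> Prop) x :
  P x -> (forall y, P y -> y = x) -> the x0 P = x.
Proof. by move=> Px U; apply: U; apply: the_spec; exists x. Qed.

Section DualLemmas.
Variable R : realType.
Local Notation D := (dual R).
Implicit Types x y : D.

Lemma dual_eq x y : re x = re y -> du x = du y -> x = y.
Proof. by case: x => a b; case: y => c d /= -> ->. Qed.

Lemma reD x y : re (x + y) = re x + re y. Proof. by []. Qed.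
Lemma duD x y : du (x + y) = du x + du y. Proof. by []. Qed.
Lemma reN x : re (- x) = - re x. Proof. by []. Qed.
Lemma duN x : du (- x) = - du x. Proof. by []. Qed.
Lemma reB x y : re (x - y) = re x - re y. Proof. by []. Qed.
Lemma duB x y : du (x - y) = du x - du y. Proof. by []. Qed.
Lemma reM x y : re (x * y) = re x * re y. Proof. by []. Qed.
Lemma duM x y : du (x * y) = re x * du y + du x * re y. Proof. by []. Qed.
Lemma re0 : re (0 : D) = 0. Proof. by []. Qed.
Lemma du0 : du (0 : D) = 0. Proof. by []. Qed.
Lemma re1 : re (1 : D) = 1. Proof. by []. Qed.
Lemma du1 : du (1 : D) = 0. Proof. by []. Qed.
Lemma redR (r : R) : re (dR r) = r. Proof. by []. Qed.
Lemma dudR (r : R) : du (dR r) = 0. Proof. by []. Qed.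
Lemma redeps : re (deps R) = 0. Proof. by []. Qed.
Lemma dudeps : du (deps R) = 1. Proof. by []. Qed.
Lemma re_nat k : re (k%:R : D) = k%:R.
Proof. by elim: k => // k IH; rewrite !mulrS reD IH. Qed.
Lemma du_nat k : du (k%:R : D) = 0.
Proof. by elim: k => // k IH; rewrite !mulrS duD IH addr0. Qed.
Lemma re_sum (I : Type) (r : seq I) (P : pred I) (F : I -> D) :
  re (\sum_(i <- r | P i) F i) = \sum_(i <- r | P i) re (F i).
Proof. exact: (big_morph _ reD re0). Qed.
Lemma du_sum (I : Type) (r : seq I) (P : pred I) (F : I -> D) :
  du (\sum_(i <- r | P i) F i) = \sum_(i <- r | P i) du (F i).
Proof. exact: (big_morph _ duD du0). Qed.

Definition dualE := (reD, duD, reN, duN, reM, duM, re0, du0, re1, du1, redR, dudR,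
   redeps, dudeps, re_nat, du_nat, re_sum, du_sum).

Lemma dRD (r s : R) : dR (r + s) = dR r + dR s. Proof. by apply: dual_eq; rewrite /= ?addr0. Qed.
Lemma dRM (r s : R) : dR (r * s) = dR r * dR s.
Proof. by apply: dual_eq; rewrite /= ?mulr0 ?mul0r ?addr0. Qed.
Lemma dRN (r : R) : dR (- r) = - dR r. Proof. by apply: dual_eq; rewrite /= ?oppr0. Qed.
Lemma dRB (r s : R) : dR (r - s) = dR r - dR s. Proof. by rewrite dRD dRN. Qed.
Lemma dR0 : dR (0:R) = 0. Proof. by []. Qed.
Lemma dR1 : dR (1:R) = 1. Proof. by []. Qed.
Lemma dRN1 : dR (-1 : R) = -1. Proof. by rewrite dRN. Qed.
Lemma dR_nat k : dR (k%:R : R) = k%:R.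
Proof. by apply: dual_eq; rewrite /= ?re_nat ?du_nat. Qed.
Lemma dR_sum (F : 'I_3 -> R) : dR (\sum_i F i) = \sum_i dR (F i).
Proof. by rewrite !sum3 !dRD. Qed.

Lemma dual_decomp x : x = dR (re x) + deps R * dR (du x).
Proof. by apply: dual_eq; rewrite /= ?mul0r ?mulr0 ?addr0 ?add0r ?mul1r. Qed.

Lemma sq1_pos x : x * x = 1 -> 0 < re x -> x = 1.
Proof.
case: x => a b /= H ha; have /= h1 := congr1 (@re R) H; have /= h2 := congr1 (@du R) H.
have a1 : a = 1 by nra.
have b0 : b = 0 by move: h2; rewrite a1 mul1r mulr1 => /eqP; rewrite -mulr2n mulrn_eq0 /= => /eqP.
by rewrite a1 b0.
Qed.

End DualLemmas.

Section SP.
Variable R : realType.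
Local Notation D := (dual R).
Variable M : lmodType D.
Variable sp : M -> M -> D.
Hypothesis Hsp : is_scalar_product sp.
Implicit Types x y z : M.

Lemma spC x y : sp x y = sp y x. Proof. by case: Hsp. Qed.
Lemma spL a x y z : sp (a *: x + y) z = a * sp x z + sp y z.
Proof. by case: Hsp => _ [h _]. Qed.
Lemma sp0l z : sp 0 z = 0.
Proof.
have := spL 1 0 0 z; rewrite scale1r !addr0 mul1r.
by move=> /(congr1 (fun t => t - sp 0 z)) /=; rewrite addrK subrr.
Qed.
Lemma sp0r z : sp z 0 = 0. Proof. by rewrite spC sp0l. Qed.
Lemma spDl x y z : sp (x + y) z = sp x z + sp y z.
Proof. by rewrite -[x]scale1r spL mul1r scale1r. Qed.
Lemma spZl a x z : sp (a *: x) z = a * sp x z.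
Proof. by rewrite -[a *: x]addr0 spL sp0l addr0. Qed.
Lemma spNl x z : sp (- x) z = - sp x z.
Proof. by rewrite -scaleN1r spZl mulN1r. Qed.
Lemma spBl x y z : sp (x - y) z = sp x z - sp y z.
Proof. by rewrite spDl spNl. Qed.
Lemma spDr x y z : sp z (x + y) = sp z x + sp z y.
Proof. by rewrite !(spC z) spDl. Qed.
Lemma spZr a x z : sp z (a *: x) = a * sp z x.
Proof. by rewrite !(spC z) spZl. Qed.
Lemma spNr x z : sp z (- x) = - sp z x.
Proof. by rewrite !(spC z) spNl. Qed.
Lemma spBr x y z : sp z (x - y) = sp z x - sp z y.
Proof. by rewrite !(spC z) spBl. Qed.
Lemma sp_suml (I : Type) (r : seq I) (P : pred I) (F : I -> M) z :
  sp (\sum_(i <- r | P i) F i) z = \sum_(i <- r | P i) sp (F i) z.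
Proof. exact: (big_morph (fun x => sp x z) (fun x y => spDl x y z) (sp0l z)). Qed.
Lemma sp_sumr (I : Type) (r : seq I) (P : pred I) (F : I -> M) z :
  sp z (\sum_(i <- r | P i) F i) = \sum_(i <- r | P i) sp z (F i).
Proof. by rewrite spC sp_suml; apply: eq_bigr => i _; rewrite spC. Qed.

Definition spE := (spDl, spDr, spZl, spZr, spNl, spNr, spBl, spBr, sp0l, sp0r, sp_suml, sp_sumr).

Definition spE' := (spDl, spDr, spZl, spZr, spNl, spNr, spBl, spBr, sp0l, sp0r).

Lemma epsM_re x : epsM x <-> re (sp x x) = 0.
Proof. by case: Hsp => _ [_ [_ h]]; rewrite h. Qed.
Lemma re_sp_eps x y : epsM x -> re (sp x y) = 0.
Proof. by case=> z ->; rewrite spZl reM redeps mul0r. Qed.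
Lemma re_sp_eps_r x y : epsM y -> re (sp x y) = 0.
Proof. by rewrite spC; apply: re_sp_eps. Qed.
Lemma epsM0 : epsM (0 : M). Proof. by exists 0; rewrite scaler0. Qed.
Lemma epsMD x y : epsM x -> epsM y -> epsM (x + y).
Proof. by case=> a -> [b ->]; exists (a + b); rewrite scalerDr. Qed.
Lemma epsMN x : epsM x -> epsM (- x).
Proof. by case=> a ->; exists (- a); rewrite scalerN. Qed.
Lemma epsMB x y : epsM x -> epsM y -> epsM (x - y).
Proof. by move=> hx hy; apply: epsMD => //; apply: epsMN. Qed.
Lemma epsMZ a x : epsM x -> epsM (a *: x).
Proof. by case=> b ->; exists (a *: b); rewrite !scalerA mulrC. Qed.
Lemma epsM_eps x : epsM (deps R *: x). Proof. by exists x. Qed.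

Section Basis.
Variable n : 'I_3 -> M.
Hypothesis Hon : Defs.orthonormal sp n.
Hypothesis Hspan : forall x, exists c : 'I_3 -> D, x = \sum_i c i *: n i.

Lemma spn i j : sp (n i) (n j) = (i == j)%:R. Proof. exact: Hon. Qed.

Lemma sp_comb (c : 'I_3 -> D) j : sp (\sum_i c i *: n i) (n j) = c j.
Proof.
rewrite sp_suml -[RHS](sum_delta c j); apply: eq_bigr => i _.
by rewrite spZl spn mulrC.
Qed.

Lemma coordE x : x = \sum_i sp x (n i) *: n i.
Proof.
have [c ->] := Hspan x; apply: eq_bigr => j _; by rewrite sp_comb.
Qed.

Lemma coord_inj x y : (forall i, sp x (n i) = sp y (n i)) -> x = y.
Proof.
move=> h; rewrite (coordE x) (coordE y); apply: eq_bigr => i _; by rewrite h.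
Qed.

Lemma sp_coord x y : sp x y = \sum_i sp x (n i) * sp y (n i).
Proof.
rewrite {1}(coordE x) sp_suml; apply: eq_bigr => i _; by rewrite spZl [sp (n i) y]spC.
Qed.

Lemma epsM_coord x : epsM x <-> forall i, re (sp x (n i)) = 0.
Proof.
split=> [h i|h]; first exact: re_sp_eps.
exists (\sum_i dR (du (sp x (n i))) *: n i).
rewrite {1}(coordE x) scaler_sumr; apply: eq_bigr => i _.
by rewrite scalerA {1}(dual_decomp (sp x (n i))) h add0r.
Qed.

Lemma cross_coord x y k : sp (cross sp n x y) (n k) =
  \sum_i \sum_j sp x (n i) * sp y (n j) * dR (levi R i j k).
Proof.
rewrite /cross sp_suml; apply: eq_bigr => i _; rewrite sp_suml; apply: eq_bigr => j _.
by rewrite sp_comb.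
Qed.

End Basis.
End SP.

Section Part1.
Variable R : realType.
Local Notation D := (dual R).
Variable M : lmodType D.
Variable sp : M -> M -> D.
Hypothesis Hsp : is_scalar_product sp.
Implicit Types x y z : M.
Variable n : 'I_3 -> M.
Hypothesis Hon : Defs.orthonormal sp n.
Hypothesis Hspan : forall x, exists c : 'I_3 -> D, x = \sum_i c i *: n i.

Lemma levi000 : @levi R o0 o0 o0 = 0. Proof. by rewrite /levi /=; lra. Qed.
Lemma levi001 : @levi R o0 o0 o1 = 0. Proof. by rewrite /levi /=; lra. Qed.
Lemma levi002 : @levi R o0 o0 o2 = 0. Proof. by rewrite /levi /=; lra. Qed.
Lemma levi010 : @levi R o0 o1 o0 = 0. Proof. by rewrite /levi /=; lra. Qed.
Lemma levi011 : @levi R o0 o1 o1 = 0. Proof. by rewrite /levi /=; lra. Qed.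
Lemma levi012 : @levi R o0 o1 o2 = 1. Proof. by rewrite /levi /=; lra. Qed.
Lemma levi020 : @levi R o0 o2 o0 = 0. Proof. by rewrite /levi /=; lra. Qed.
Lemma levi021 : @levi R o0 o2 o1 = -1. Proof. by rewrite /levi /=; lra. Qed.
Lemma levi022 : @levi R o0 o2 o2 = 0. Proof. by rewrite /levi /=; lra. Qed.
Lemma levi100 : @levi R o1 o0 o0 = 0. Proof. by rewrite /levi /=; lra. Qed.
Lemma levi101 : @levi R o1 o0 o1 = 0. Proof. by rewrite /levi /=; lra. Qed.
Lemma levi102 : @levi R o1 o0 o2 = -1. Proof. by rewrite /levi /=; lra. Qed.
Lemma levi110 : @levi R o1 o1 o0 = 0. Proof. by rewrite /levi /=; lra. Qed.
Lemma levi111 : @levi R o1 o1 o1 = 0. Proof. by rewrite /levi /=; lra. Qed.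
Lemma levi112 : @levi R o1 o1 o2 = 0. Proof. by rewrite /levi /=; lra. Qed.
Lemma levi120 : @levi R o1 o2 o0 = 1. Proof. by rewrite /levi /=; lra. Qed.
Lemma levi121 : @levi R o1 o2 o1 = 0. Proof. by rewrite /levi /=; lra. Qed.
Lemma levi122 : @levi R o1 o2 o2 = 0. Proof. by rewrite /levi /=; lra. Qed.
Lemma levi200 : @levi R o2 o0 o0 = 0. Proof. by rewrite /levi /=; lra. Qed.
Lemma levi201 : @levi R o2 o0 o1 = 1. Proof. by rewrite /levi /=; lra. Qed.
Lemma levi202 : @levi R o2 o0 o2 = 0. Proof. by rewrite /levi /=; lra. Qed.
Lemma levi210 : @levi R o2 o1 o0 = -1. Proof. by rewrite /levi /=; lra. Qed.
Lemma levi211 : @levi R o2 o1 o1 = 0. Proof. by rewrite /levi /=; lra. Qed.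
Lemma levi212 : @levi R o2 o1 o2 = 0. Proof. by rewrite /levi /=; lra. Qed.
Lemma levi220 : @levi R o2 o2 o0 = 0. Proof. by rewrite /levi /=; lra. Qed.
Lemma levi221 : @levi R o2 o2 o1 = 0. Proof. by rewrite /levi /=; lra. Qed.
Lemma levi222 : @levi R o2 o2 o2 = 0. Proof. by rewrite /levi /=; lra. Qed.
Definition leviE := (levi000, levi001, levi002, levi010, levi011, levi012, levi020, levi021, levi022, levi100, levi101, levi102, levi110, levi111, levi112, levi120, levi121, levi122, levi200, levi201, levi202, levi210, levi211, levi212, levi220, levi221, levi222).

Lemma fR : (false%:R : D) = 0. Proof. by []. Qed.
Lemma tR : (true%:R : D) = 1. Proof. by []. Qed.
Definition simpD := (mulr0, mul0r, mulr1, mul1r, addr0, add0r, oppr0).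

Ltac crunch := rewrite /ad; do 4 (rewrite ?(cross_coord Hsp Hon) ?(spE' Hsp) ?sum3);
  rewrite ?(spn Hon) ?eqoE ?eqxx ?leviE ?dR0 ?dR1 ?dRN1.

Lemma ad_lin x a y y' : ad sp n x (a *: y + y') = a *: ad sp n x y + ad sp n x y'.
Proof. apply: (coord_inj Hsp Hon Hspan) => k; case3 k; crunch; ring. Qed.

Lemma ad_antisym x y z : sp (ad sp n x y) z = - sp y (ad sp n x z).
Proof.
rewrite (sp_coord Hsp Hon Hspan (ad sp n x y)) (sp_coord Hsp Hon Hspan y).
crunch; ring.
Qed.

Lemma ad_linx a x1 x2 y : ad sp n (a *: x1 + x2) y = a *: ad sp n x1 y + ad sp n x2 y.
Proof. apply: (coord_inj Hsp Hon Hspan) => k; case3 k; crunch; ring. Qed.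

Lemma ad_jacobi x1 x2 y : ad sp n (- cross sp n x1 x2) y =
  ad sp n x1 (ad sp n x2 y) - ad sp n x2 (ad sp n x1 y).
Proof. apply: (coord_inj Hsp Hon Hspan) => k; case3 k; crunch; ring. Qed.

Lemma ad_inj x1 x2 : ad sp n x1 =1 ad sp n x2 -> x1 = x2.
Proof.
move=> h; apply: (coord_inj Hsp Hon Hspan) => i.
have key : forall j k, sp (ad sp n x1 (n j)) (n k) = sp (ad sp n x2 (n j)) (n k).
  by move=> j k; rewrite h.
case3 i.
- by have := key o1 o2; crunch; rewrite ?fR ?tR ?simpD => /oppr_inj.
- by have := key o2 o0; crunch; rewrite ?fR ?tR ?simpD => /oppr_inj.
- by have := key o0 o1; crunch; rewrite ?fR ?tR ?simpD => /oppr_inj.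
Qed.

Lemma ad_surj f : is_so3 sp f -> exists x, f =1 ad sp n x.
Proof.
case=> flin fanti.
have f0 : f 0 = 0.
  have := flin 1 0 0; rewrite !scale1r !addr0.
  by move=> /(congr1 (fun t => t - f 0)); rewrite addrK subrr => <-.
have fZ a x : f (a *: x) = a *: f x by rewrite -[a *: x]addr0 flin f0 addr0.
have fD x y : f (x + y) = f x + f y by rewrite -[x]scale1r flin !scale1r.
have fy y : f y = \sum_j sp y (n j) *: f (n j).
  by rewrite {1}(coordE Hsp Hon Hspan y) !sum3 !fD !fZ.
have anti j k : sp (f (n j)) (n k) = - sp (f (n k)) (n j) by rewrite fanti spC.
have diag j : sp (f (n j)) (n j) = 0.
  have h := anti j j; apply: dual_eq.
    by have := congr1 (@re R) h; rewrite reN re0; lra.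
  by have := congr1 (@du R) h; rewrite duN du0; lra.
exists (-(sp (f (n o1)) (n o2)) *: n o0 + -(sp (f (n o2)) (n o0)) *: n o1
        + -(sp (f (n o0)) (n o1)) *: n o2).
move=> y; apply: (coord_inj Hsp Hon Hspan) => k; rewrite fy.
case3 k; crunch; rewrite ?(anti o1 o0) ?(anti o0 o2) ?(anti o2 o1) ?diag ?fR ?tR.
- ring.
- ring.
- ring.
Qed.
End Part1.



Lemma sig_eqP (A : Type) (Q : A -> Prop) (a b : A) (pa : Q a) (pb : Q b) :
  a = b -> exist Q a pa = exist Q b pb.
Proof. move=> h; subst; congr exist; exact: Prop_irrelevance. Qed.

Section VSpace.
Variable R : realType.
Local Notation D := (dual R).
Variable M : lmodType D.
Variable sp : M -> M -> D.
Hypothesis Hsp : is_scalar_product sp.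
Implicit Types x y z : M.

Lemma piV_eq x y : epsM (x - y) -> piV x = piV y.
Proof.
move=> h.
have E : coset x = coset y.
  rewrite /coset; apply/funext => w; apply/propext; split => hw.
  - by have := epsMD hw h; rewrite addrA subrK.
  - by have := epsMB hw h; rewrite opprB addrA subrK.
by rewrite /piV; apply: sig_eqP.
Qed.

Lemma piV_inv x y : piV x = piV y -> epsM (x - y).
Proof.
move=> /(congr1 sval) /= E.
have : coset x x by rewrite /coset /= subrr; exact: epsM0.
by rewrite E.
Qed.

Lemma reprVK (v : V M) : piV (reprV v) = v.
Proof.
rewrite /reprV; apply: (@the_spec _ 0 (fun x => piV x = v)).
case: v => S [x hx]; exists x; rewrite /piV.
by apply: sig_eqP.
Qed.

Lemma reprV_piV x : epsM (reprV (piV x) - x).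
Proof. by apply: piV_inv; rewrite reprVK. Qed.

Lemma vdot_piV x y : vdot sp (piV x) (piV y) = re (sp x y).
Proof.
rewrite /vdot; move: (reprV_piV x) (reprV_piV y).
set a := reprV (piV x); set b := reprV (piV y) => ex ey.
rewrite -(subrK x a) -(subrK y b).
move: (a - x) ex => u hu; move: (b - y) ey => w hw.
rewrite !(spDl Hsp) !(spDr Hsp) !reD (re_sp_eps Hsp _ hu) (re_sp_eps Hsp _ hu).
by rewrite (re_sp_eps_r Hsp _ hw) !add0r.
Qed.

Lemma re_sp_comb (p : 'I_3 -> M) (c : 'I_3 -> R) y :
  re (sp (\sum_i dR (c i) *: p i) y) = \sum_i c i * re (sp (p i) y).
Proof. by rewrite (sp_suml Hsp) re_sum; apply: eq_bigr => i _; rewrite (spZl Hsp). Qed.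

Lemma sum_delta_scale (f : 'I_3 -> M) i : \sum_k ((k == i)%:R : D) *: f k = f i.
Proof.
rewrite (bigD1 i) //= eqxx scale1r big1 ?addr0 // => k /negbTE ->.
by rewrite scale0r.
Qed.

Section Pt.
Variable P : E sp.
Local Notation S := (sval P).

Lemma pt_span : exists p, real_indep p /\ S = real_span p.
Proof. by case: P => /= S0 [[p [hp ->]] _]; exists p. Qed.

Lemma pt_closed r x y : S x -> S y -> S (dR r *: x + y).
Proof.
have [p [_ ->]] := pt_span; case=> c -> [c' ->].
exists (fun i => r * c i + c' i); rewrite scaler_sumr -big_split /=.
by apply: eq_bigr => i _; rewrite scalerA -dRM -scalerDl -dRD.
Qed.

Lemma pt0 : S 0.
Proof.
have [p [_ ->]] := pt_span; exists (fun _ => 0).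
by rewrite big1 // => i _; rewrite dR0 scale0r.
Qed.

Lemma ptD x y : S x -> S y -> S (x + y).
Proof. by move=> hx hy; have := pt_closed 1 hx hy; rewrite dR1 scale1r. Qed.

Lemma ptB x y : S x -> S y -> S (x - y).
Proof.
move=> hx hy; have := pt_closed (-1) hy hx; rewrite dRN1 scaleN1r addrC //.
Qed.

Lemma ptZ r x : S x -> S (dR r *: x).
Proof. by move=> hx; have := pt_closed r hx pt0; rewrite addr0. Qed.

Lemma pt_comb (q : 'I_3 -> M) (c : 'I_3 -> R) :
  (forall i, S (q i)) -> S (\sum_i dR (c i) *: q i).
Proof.
move=> hq; apply: (big_ind S) => //; [exact: pt0 | exact: ptD | move=> i _].
exact: ptZ.
Qed.

Lemma pt_du x y : S x -> S y -> du (sp x y) = 0.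
Proof. by case: P => /= S0 [_ [h _]]; apply: h. Qed.

Lemma pt_eps x : S x -> epsM x -> x = 0.
Proof. by case: P => /= S0 [_ [_ h]]; apply: h. Qed.

Lemma lift_uniq x y : S x -> S y -> piV x = piV y -> x = y.
Proof.
move=> hx hy /piV_inv h; apply/eqP; rewrite -subr_eq0; apply/eqP.
by apply: pt_eps => //; apply: ptB.
Qed.

End Pt.

Section WithM.
Variable m : 'I_3 -> M.
Hypothesis Hmo : Defs.orthonormal sp m.
Hypothesis Hms : forall x, exists c : 'I_3 -> D, x = \sum_i c i *: m i.

Lemma ortho_span (q : 'I_3 -> M) : Defs.orthonormal sp q ->
  forall x, exists c : 'I_3 -> D, x = \sum_i c i *: q i.
Proof.
move=> Hq x.
pose U : 'M[D]_3 := \matrix_(i, a) sp (q i) (m a).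
have UUt : U *m U^T = 1%:M.
  apply/matrixP => i j; rewrite !mxE.
  rewrite -[RHS](Hq i j) (sp_coord Hsp Hmo Hms (q i) (q j)).
  by apply: eq_bigr => a _; rewrite !mxE.
have d2 : \det U * \det U = 1.
  by have := congr1 determinant UUt; rewrite det_mulmx det_tr det1.
set w := x - \sum_i sp x (q i) *: q i.
have wq i : sp w (q i) = 0.
  by rewrite /w (spBl Hsp) (sp_comb Hsp Hq) subrr.
have wm : forall a, sp w (m a) = 0.
  pose W : 'cV[D]_3 := \col_a sp w (m a).
  have UW : U *m W = 0.
    apply/matrixP => i j; rewrite !mxE; apply: (etrans _ (wq i)); rewrite (spC Hsp w) (sp_coord Hsp Hmo Hms (q i) w).
    by apply: eq_bigr => a _; rewrite !mxE.
  have dW : \det U *: W = 0.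
    by rewrite -mul_scalar_mx -mul_adj_mx -mulmxA UW mulmx0.
  move=> a; have := congr1 (fun N : 'cV[D]_3 => N a 0) dW; rewrite !mxE => h.
  by rewrite -[sp w (m a)]mul1r -d2 -mulrA h mulr0.
have w0 : w = 0 by apply: (coord_inj Hsp Hmo Hms) => a; rewrite wm (sp0l Hsp).
exists (fun i => sp x (q i)); apply/eqP; rewrite -subr_eq0; apply/eqP; exact w0.
Qed.

Lemma lift_exists (P : E sp) (v : V M) : exists x, sval P x /\ piV x = v.
Proof.
have [p [hind hS]] := pt_span P.
pose Pm : 'M[R]_3 := \matrix_(i, a) re (sp (p i) (m a)).
have key : forall (c : 'rV[R]_3) a,
    re (sp (\sum_i dR (c 0 i) *: p i) (m a)) = (c *m Pm) 0 a.
  by move=> c a; rewrite re_sp_comb !mxE; apply: eq_bigr => i _; rewrite mxE.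
have hp i : sval P (p i).
  rewrite hS; exists (fun k => (k == i)%:R).
  by rewrite -{1}(sum_delta_scale p i); apply: eq_bigr => k _; rewrite dR_nat.
have unitPm : Pm \in unitmx.
  rewrite unitmxE unitfE; apply/negP => /det0P [c cn0 cP].
  have hx : sval P (\sum_i dR (c 0 i) *: p i) by apply: pt_comb.
  have ex : epsM (\sum_i dR (c 0 i) *: p i).
    by apply/(epsM_coord Hsp Hmo Hms) => a; rewrite key cP mxE.
  move: (pt_eps hx ex) => /(hind (fun i => c 0 i)) h0.
  by move/eqP: cn0; apply; apply/rowP => i; rewrite h0 mxE.
pose t : 'rV[R]_3 := \row_a re (sp (reprV v) (m a)).
pose c := t *m invmx Pm.
exists (\sum_i dR (c 0 i) *: p i); split; first by apply: pt_comb.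
rewrite -[v]reprVK; apply: piV_eq; apply/(epsM_coord Hsp Hmo Hms) => a.
by rewrite (spBl Hsp) reB key /c mulmxKV // mxE subrr.
Qed.

Lemma liftE_spec (P : E sp) v : sval P (liftE sp P v) /\ piV (liftE sp P v) = v.
Proof. by apply: (@the_spec _ 0 (fun x => sval P x /\ piV x = v)); apply: lift_exists. Qed.

Lemma liftE_eq (P : E sp) v x : sval P x -> piV x = v -> liftE sp P v = x.
Proof.
move=> hx hv; have [h1 h2] := liftE_spec P v.
by apply: (lift_uniq h1 hx); rewrite h2 hv.
Qed.

End WithM.
End VSpace.

Section EStuff.
Variable R : realType.
Local Notation D := (dual R).
Variable M : lmodType D.
Variable sp : M -> M -> D.
Hypothesis Hsp : is_scalar_product sp.
Implicit Types x y z : M.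
Variable m : 'I_3 -> M.
Hypothesis Hmo : Defs.orthonormal sp m.
Hypothesis Hms : forall x, exists c : 'I_3 -> D, x = \sum_i c i *: m i.
Variable e : 'I_3 -> V M.
Hypothesis He : forall i j, vdot sp (e i) (e j) = (i == j)%:R.

Definition eP (P : E sp) i := liftE sp P (e i).
Definition ec (v : V M) i := vdot sp v (e i).

Lemma eP_in P i : sval P (eP P i).
Proof. exact: (liftE_spec Hsp Hmo Hms P (e i)).1. Qed.
Lemma eP_pi P i : piV (eP P i) = e i.
Proof. exact: (liftE_spec Hsp Hmo Hms P (e i)).2. Qed.

Lemma eP_on P : Defs.orthonormal sp (eP P).
Proof.
move=> i j; apply: dual_eq.
  by rewrite -(vdot_piV Hsp) !eP_pi He re_nat.
by rewrite (pt_du (eP_in P i) (eP_in P j)) du_nat.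
Qed.

Lemma eP_span P x : exists c : 'I_3 -> D, x = \sum_i c i *: eP P i.
Proof. exact: (ortho_span Hsp Hmo Hms (eP_on P)). Qed.

Lemma pt_mem P x : sval P x <-> forall i, du (sp x (eP P i)) = 0.
Proof.
split=> [hx i|h]; first exact: (pt_du hx (eP_in P i)).
rewrite (coordE Hsp (eP_on P) (eP_span P) x).
have -> : \sum_i sp x (eP P i) *: eP P i = \sum_i dR (re (sp x (eP P i))) *: eP P i.
  apply: eq_bigr => i _; congr (_ *: _).
  by rewrite {1}(dual_decomp (sp x (eP P i))) h mulr0 addr0.
by apply: pt_comb => i; apply: eP_in.
Qed.

Lemma point_m : is_point sp (real_span m).
Proof.
have spc (c : 'I_3 -> R) j : sp (\sum_i dR (c i) *: m i) (m j) = dR (c j).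
  exact: (sp_comb Hsp Hmo).
split; [exists m; split => // | split].
- move=> c h i; have := spc c i; rewrite h (sp0l Hsp) => /(congr1 (@re R)).
  by rewrite redR re0.
- move=> x y [c ->] [c' ->].
  rewrite (sp_coord Hsp Hmo Hms) du_sum big1 // => i _.
  by rewrite (spc c i) (spc c' i) duM !dudR !mulr0 !mul0r addr0.
- move=> x [c ->] /(epsM_coord Hsp Hmo Hms) h.
  rewrite big1 // => i _; have := h i; rewrite (spc c i) redR => ->.
  by rewrite dR0 scale0r.
Qed.

Definition P0 : E sp := exist _ (real_span m) point_m.

Lemma ec_piV P x i : ec (piV x) i = re (sp x (eP P i)).
Proof. by rewrite /ec -(eP_pi P i) (vdot_piV Hsp). Qed.

Lemma ec_repr u i : ec u i = re (sp (reprV u) (eP P0 i)).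
Proof. by rewrite -{1}(reprVK u) (ec_piV P0). Qed.

Lemma ec_inj u v : (forall i, ec u i = ec v i) -> u = v.
Proof.
move=> h; rewrite -(reprVK u) -(reprVK v); apply: piV_eq.
apply/(epsM_coord Hsp (eP_on P0) (eP_span P0)) => i.
by rewrite (spBl Hsp) reB -!ec_repr h subrr.
Qed.

Lemma ec_vadd u v i : ec (vadd u v) i = ec u i + ec v i.
Proof. by rewrite /vadd (ec_piV P0) (spDl Hsp) reD -!ec_repr. Qed.
Lemma ec_vsub u v i : ec (vsub u v) i = ec u i - ec v i.
Proof. by rewrite /vsub (ec_piV P0) (spBl Hsp) reB -!ec_repr. Qed.
Lemma ec_vscale r u i : ec (vscale r u) i = r * ec u i.
Proof. by rewrite /vscale (ec_piV P0) (spZl Hsp) reM redR -!ec_repr. Qed.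
Lemma ec_vcomb c (f : 'I_3 -> V M) i : ec (vcomb c f) i = \sum_k c k * ec (f k) i.
Proof.
rewrite /vcomb (ec_piV P0) re_sp_comb //; apply: eq_bigr => k _.
by rewrite -ec_repr.
Qed.
Lemma ec_e k i : ec (e k) i = (k == i)%:R.
Proof. exact: He. Qed.
Lemma ec_vcomb_e c i : ec (vcomb c e) i = c i.
Proof.
rewrite ec_vcomb -[RHS](sum_delta c i); apply: eq_bigr => k _.
by rewrite ec_e mulrC.
Qed.
Lemma ec_vcross u v k : ec (vcross sp e u v) k =
  \sum_i \sum_j ec u i * ec v j * levi R i j k.
Proof. by rewrite /vcross ec_vcomb_e. Qed.
Lemma ec_piV0 i : ec (piV 0) i = 0.
Proof. by rewrite (ec_piV P0) (sp0l Hsp). Qed.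

Lemma ec_beta z P i : ec (beta sp z P) i = du (sp z (eP P i)).
Proof.
pose zc k := sp z (eP P k).
have ex : exists v, exists a x, sval P a /\ piV x = v /\ z = a + deps R *: x.
  exists (piV (\sum_k dR (du (zc k)) *: eP P k)).
  exists (\sum_k dR (re (zc k)) *: eP P k), (\sum_k dR (du (zc k)) *: eP P k).
  split; first by apply: pt_comb => k; apply: eP_in.
  split => //; apply: (coord_inj Hsp (eP_on P) (eP_span P)) => j.
  rewrite (spDl Hsp) (spZl Hsp) !(sp_comb Hsp (eP_on P)).
  by rewrite [LHS]dual_decomp.
have [a [x [Pa [hx hz]]]] := @the_spec _ (piV 0)
  (fun v => exists a x, sval P a /\ piV x = v /\ z = a + deps R *: x) ex.
rewrite /beta -hx (ec_piV P) hz (spDl Hsp) (spZl Hsp) duD duM.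
by rewrite (pt_du Pa (eP_in P i)) redeps dudeps mul0r mul1r !add0r.
Qed.


Lemma natb0 (T : pzSemiRingType) : (false%:R : T) = 0. Proof. by []. Qed.
Lemma natb1 (T : pzSemiRingType) : (true%:R : T) = 1. Proof. by []. Qed.

Definition Lm (d : 'I_3 -> R) i j := \sum_k levi R i j k * d k.

Lemma pert_prod (a b : 'I_3 -> R) i j :
  \sum_k (((i == k)%:R + deps R * dR (a k)) * ((j == k)%:R + deps R * dR (b k))) =
  (i == j)%:R + deps R * dR (b i + a j).
Proof.
apply: dual_eq; rewrite !sum3;
 case3 i; case3 j; rewrite ?eqoE ?eqxx ?natb0 ?natb1 !dualE; ring.
Qed.

Lemma Lm_anti d i j : Lm d i j + Lm d j i = 0.
Proof. by case3 i; case3 j; rewrite /Lm !sum3 !leviE; ring. Qed.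

Lemma Lm_inj d d' : (forall i j, Lm d i j = Lm d' i j) -> d = d'.
Proof.
move=> h; apply/funext => k; case3 k;
  [have := h o1 o2 | have := h o2 o0 | have := h o0 o1];
  rewrite /Lm !sum3 !leviE; lra.
Qed.

Lemma dvec_spec A B i j : sp (eP B i) (eP A j) =
  (i == j)%:R + deps R * dR (Lm (dvec sp e B A) i j).
Proof.
pose W i j := du (sp (eP B i) (eP A j)).
have h1 i' j' : sp (eP B i') (eP A j') = (i' == j')%:R + deps R * dR (W i' j').
  apply: dual_eq.
    by rewrite reD reM redeps mul0r addr0 re_nat -(vdot_piV Hsp) !eP_pi He.
  by rewrite duD du_nat duM redeps dudeps dudR redR mul0r mul1r !add0r.
have hB i' : eP B i' = eP A i' + deps R *: \sum_j dR (W i' j) *: eP A j.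
  apply: (coord_inj Hsp (eP_on A) (eP_span A)) => j'.
  by rewrite h1 (spDl Hsp) (spZl Hsp) (sp_comb Hsp (eP_on A)) (eP_on A i' j').
have anti i' j' : W i' j' + W j' i' = 0.
  have := eP_on B i' j'; rewrite (sp_coord Hsp (eP_on A) (eP_span A)).
  under eq_bigr => k _ do rewrite !h1.
  rewrite (pert_prod (W i') (W j')) => /(congr1 (@du R)).
  rewrite duD du_nat duM redeps dudeps dudR redR mul0r mul1r !add0r.
  by move=> h; rewrite addrC.
pose d := fun k : 'I_3 => if k == o0 then W o1 o2 else if k == o1 then W o2 o0 else W o0 o1.
have hd i' j' : W i' j' = Lm d i' j'.
  move: (anti o0 o0) (anti o0 o1) (anti o0 o2) (anti o1 o1) (anti o1 o2) (anti o2 o2).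
  case3 i'; case3 j'; rewrite /Lm !sum3 !leviE /d ?eqxx ?eqoE /=; lra.
have conv (d' : 'I_3 -> R) i' : \sum_j \sum_k dR (levi R i' j k * d' k) *: eP A j =
    \sum_j dR (Lm d' i' j) *: eP A j.
  by apply: eq_bigr => j' _; rewrite -scaler_suml -dR_sum.
have ex : exists d', forall i', liftE sp B (e i') = liftE sp A (e i') +
    deps R *: \sum_j \sum_k dR (levi R i' j k * d' k) *: liftE sp A (e j).
  exists d => i'; rewrite -/(eP B i') -/(eP A i') conv -/(eP A _) hB.
  by congr (_ + deps R *: _); apply: eq_bigr => j' _; rewrite hd.
have hv := @the_spec _ (fun _ => 0) _ ex.
rewrite -/(dvec sp e B A) in hv.
rewrite /eP (hv i) conv (spDl Hsp) (spZl Hsp) -/(eP A _) (sp_comb Hsp (eP_on A)).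
by rewrite (eP_on A i j).
Qed.

Lemma ec_diffE A B i : ec (diffE sp e B A) i = dvec sp e B A i.
Proof. by rewrite /diffE ec_vcomb_e. Qed.

Lemma transl_spec A v : diffE sp e (transl sp e A v) A = v.
Proof.
pose d := ec v.
pose f i := eP A i + deps R *: \sum_j dR (Lm d i j) *: eP A j.
have spf i j : sp (f i) (eP A j) = (i == j)%:R + deps R * dR (Lm d i j).
  by rewrite /f (spDl Hsp) (spZl Hsp) (sp_comb Hsp (eP_on A)) (eP_on A i j).
have ff : Defs.orthonormal sp f.
  move=> i j; rewrite (sp_coord Hsp (eP_on A) (eP_span A)).
  under eq_bigr => k _ do rewrite !spf.
  by rewrite (pert_prod (Lm d i) (Lm d j)) Lm_anti dR0 mulr0 addr0.
have spfc (c : 'I_3 -> R) j : sp (\sum_i dR (c i) *: f i) (f j) = dR (c j).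
  exact: (sp_comb Hsp ff).
have refc (c : 'I_3 -> R) j : re (sp (\sum_i dR (c i) *: f i) (eP A j)) = c j.
  rewrite (re_sp_comb Hsp) -[RHS](sum_delta c j); apply: eq_bigr => i _.
  by rewrite spf reD reM redeps mul0r addr0 re_nat mulrC.
have ptQ : is_point sp (real_span f).
  split; [exists f; split => // | split].
  - move=> c h i; have := refc c i; rewrite h (sp0l Hsp) re0.
    by move=> h0; rewrite -h0.
  - move=> x y [c ->] [c' ->].
    rewrite (sp_sumr Hsp) du_sum big1 // => j _.
    by rewrite (spZr Hsp) (spfc c j) duM !dudR !mulr0 !mul0r addr0.
  - move=> x [c ->] hx; rewrite big1 // => i _.
    have := refc c i; rewrite (re_sp_eps Hsp _ hx) => <-.
    by rewrite dR0 scale0r.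
pose Q : E sp := exist _ (real_span f) ptQ.
have eQ i : eP Q i = f i.
  apply: (liftE_eq Hsp Hmo Hms).
    exists (fun k => (k == i)%:R).
    by rewrite -{1}(sum_delta_scale f i); apply: eq_bigr => k _; rewrite dR_nat.
  rewrite -(eP_pi A i); apply: piV_eq => //.
  by rewrite /f addrC addKr; apply: epsM_eps.
have dQ : dvec sp e Q A = d.
  apply: Lm_inj => i j; have := dvec_spec A Q i j.
  rewrite eQ spf => /(congr1 (@du R)).
  by rewrite !(duD, du_nat, duM, redeps, dudeps, dudR, redR, mul0r, mul1r, add0r).
apply: (@the_spec _ A (fun Q => diffE sp e Q A = v)).
by exists Q; apply: ec_inj => i; rewrite ec_diffE dQ.
Qed.

Lemma beta_diff z P Q i : ec (beta sp z Q) i - ec (beta sp z P) i =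
  \sum_a \sum_b ec (piV z) a * dvec sp e Q P b * levi R a b i.
Proof.
rewrite !ec_beta (spC Hsp z (eP Q i)) (sp_coord Hsp (eP_on P) (eP_span P) (eP Q i) z).
under eq_bigr => j _ do rewrite dvec_spec.
under [RHS]eq_bigr => a _ do rewrite (ec_piV P).
rewrite /Lm !sum3; case3 i; rewrite ?eqoE ?eqxx ?natb0 ?natb1 !dualE !leviE; ring.
Qed.

Lemma beta_screw z : is_screw sp e (beta sp z).
Proof.
exists (piV z) => P Q; apply: ec_inj => i.
rewrite ec_vsub ec_vcross beta_diff; apply: eq_bigr => a _; apply: eq_bigr => b _.
by rewrite ec_diffE.
Qed.

Lemma beta_lin r z1 z2 A :
  beta sp (dR r *: z1 + z2) A = vadd (vscale r (beta sp z1 A)) (beta sp z2 A).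
Proof.
apply: ec_inj => i; rewrite ec_vadd ec_vscale !ec_beta (spDl Hsp) (spZl Hsp).
by rewrite duD duM redR dudR mul0r addr0.
Qed.

Lemma screw_ec (s : E sp -> V M) r :
  (forall P Q, vsub (s Q) (s P) = vcross sp e r (diffE sp e Q P)) ->
  forall P Q i, ec (s Q) i - ec (s P) i =
    \sum_a \sum_b ec r a * dvec sp e Q P b * levi R a b i.
Proof.
move=> hr P Q i; rewrite -ec_vsub hr ec_vcross.
by apply: eq_bigr => a _; apply: eq_bigr => b _; rewrite ec_diffE.
Qed.

Lemma dvec_transl P (d : 'I_3 -> R) : dvec sp e (transl sp e P (vcomb d e)) P = d.
Proof. by apply/funext => b; rewrite -ec_diffE transl_spec ec_vcomb_e. Qed.

Lemma beta_inj z1 z2 : beta sp z1 =1 beta sp z2 -> z1 = z2.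
Proof.
move=> h.
have key (d : 'I_3 -> R) i : \sum_a \sum_b ec (piV z1) a * d b * levi R a b i =
    \sum_a \sum_b ec (piV z2) a * d b * levi R a b i.
  have := beta_diff z1 P0 (transl sp e P0 (vcomb d e)) i.
  have := beta_diff z2 P0 (transl sp e P0 (vcomb d e)) i.
  by rewrite !dvec_transl !h => <- <-.
have hpi a : ec (piV z1) a = ec (piV z2) a.
  case3 a;
  [ have := key (fun b => (b == o1)%:R) o2
  | have := key (fun b => (b == o2)%:R) o0
  | have := key (fun b => (b == o0)%:R) o1 ];
  rewrite !sum3 ?eqoE ?eqxx ?natb0 ?natb1 !leviE; lra.
apply: (coord_inj Hsp (eP_on P0) (eP_span P0)) => i; apply: dual_eq.
  by rewrite -!(ec_piV P0) hpi.
by rewrite -!ec_beta h.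
Qed.

Lemma beta_surj s : is_screw sp e s -> exists z, s =1 beta sp z.
Proof.
case=> r hr.
pose z := \sum_i (dR (ec r i) + deps R * dR (ec (s P0) i)) *: eP P0 i.
have zc i : sp z (eP P0 i) = dR (ec r i) + deps R * dR (ec (s P0) i).
  exact: (sp_comb Hsp (eP_on P0)).
have hpi : piV z = r.
  by apply: ec_inj => a; rewrite (ec_piV P0) zc reD reM redeps mul0r addr0 redR.
have hP0 : beta sp z P0 = s P0.
  apply: ec_inj => a; rewrite ec_beta zc duD duM dudR redeps dudeps redR.
  by rewrite mul0r mul1r !add0r.
exists z => Q; apply: ec_inj => i.
have h1 := beta_diff z P0 Q i; rewrite hpi hP0 in h1.
have h2 := screw_ec hr P0 Q i.
lra.
Qed.

Lemma vnorm_piV0 : vnorm sp (piV (0 : M)) = 0.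
Proof. by rewrite /vnorm (vdot_piV Hsp) (sp0l Hsp) re0 sqrtr0. Qed.

Lemma vderiv_beta z P v : vderiv sp e (beta sp z) P v (vcross sp e (piV z) v).
Proof.
rewrite /vderiv.
set F := (fun t : R => _).
have -> : F = (fun _ => 0).
  apply/funext => t; rewrite /F.
  have hd b : dvec sp e (transl sp e P (vscale t v)) P b = t * ec v b.
    by rewrite -ec_diffE transl_spec ec_vscale.
  have -> : vsub (vsub (beta sp z (transl sp e P (vscale t v))) (beta sp z P))
      (vscale t (vcross sp e (piV z) v)) = piV 0.
    apply: ec_inj => i; rewrite ec_piV0 !ec_vsub ec_vscale ec_vcross (beta_diff z P).
    by rewrite !sum3 !hd; ring.
  by rewrite vnorm_piV0 mul0r.
exact: cvg_cst.
Qed.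

Lemma beta_bracket z1 z2 :
  (forall P x y, cross sp m x y = cross sp (eP P) x y) ->
  lie_bracket sp e (beta sp z1) (beta sp z2) (beta sp (- cross sp m z1 z2)).
Proof.
move=> Hcr P.
exists (vcross sp e (piV z2) (beta sp z1 P)), (vcross sp e (piV z1) (beta sp z2 P)).
split; first exact: vderiv_beta.
split; first exact: vderiv_beta.
apply: ec_inj => i; rewrite ec_vsub !ec_vcross ec_beta (Hcr P) (spNl Hsp).
rewrite (cross_coord Hsp (eP_on P)).
rewrite !sum3 !ec_beta !(ec_piV P); case3 i; rewrite !leviE !dualE; ring.
Qed.

End EStuff.



Lemma re_det (R : realType) (U : 'M[dual R]_3) : re (\det U) = \det (map_mx (@re R) U).
Proof. by rewrite !det3E !mxE !dualE. Qed.

Section Orient.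
Variable R : realType.
Local Notation D := (dual R).
Variable M : lmodType D.
Variable sp : M -> M -> D.
Hypothesis Hsp : is_scalar_product sp.
Implicit Types x y z : M.
Variable m : 'I_3 -> M.
Hypothesis Hmo : Defs.orthonormal sp m.
Hypothesis Hms : forall x, exists c : 'I_3 -> D, x = \sum_i c i *: m i.

Lemma cross_change (n : 'I_3 -> M) : Defs.orthonormal sp n -> forall x y,
  cross sp n x y = \det (\matrix_(i, a) sp (n i) (m a)) *: cross sp m x y.
Proof.
move=> Hn x y; apply: (coord_inj Hsp Hmo Hms) => c.
rewrite (spZl Hsp) (cross_coord Hsp Hmo) /cross !sum3 !(spDl Hsp) !(spZl Hsp).
rewrite (sp_coord Hsp Hmo Hms x (n o0)) (sp_coord Hsp Hmo Hms x (n o1)).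
rewrite (sp_coord Hsp Hmo Hms x (n o2)) (sp_coord Hsp Hmo Hms y (n o0)).
rewrite (sp_coord Hsp Hmo Hms y (n o1)) (sp_coord Hsp Hmo Hms y (n o2)).
rewrite !sum3 det3E !mxE.
case3 c; rewrite !leviE ?dR0 ?dR1 ?dRN1; ring.
Qed.

Lemma det_one (n : 'I_3 -> M) : Defs.orthonormal sp n ->
  0 < re (\det (\matrix_(i, a) sp (n i) (m a))) ->
  \det (\matrix_(i, a) sp (n i) (m a)) = 1.
Proof.
move=> Hq hpos; set U := \matrix_(i, a) sp (n i) (m a).
have UUt : U *m U^T = 1%:M.
  apply/matrixP => i j; rewrite !mxE.
  rewrite -[RHS](Hq i j) (sp_coord Hsp Hmo Hms (n i) (n j)).
  by apply: eq_bigr => a _; rewrite !mxE.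
apply: sq1_pos => //.
by have := congr1 determinant UUt; rewrite det_mulmx det_tr det1.
Qed.


Variable e : 'I_3 -> V M.
Hypothesis He : forall i j, vdot sp (e i) (e j) = (i == j)%:R.
Variable OR : set ('I_3 -> M).
Variable b0 : 'I_3 -> M.
Hypothesis HOR : OR = [set b' | is_basis b' /\ same_orientation b0 b'].
Hypothesis HmOR : OR m.
Hypothesis HeOR : exists b, OR b /\ exists A : 'M[R]_3,
    0 < \det A /\ forall j, e j = vcomb (fun k => A j k) (fun k => piV (b k)).

Lemma rc_piV x y z : piV x = piV y -> re (sp x z) = re (sp y z).
Proof.
move=> /piV_inv h; have := re_sp_eps Hsp z h.
by rewrite (spBl Hsp) reB => /eqP; rewrite subr_eq0 => /eqP.
Qed.

Lemma rc_comb (c : 'I_3 -> D) (q : 'I_3 -> M) a :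
  re (sp (\sum_k c k *: q k) (m a)) = \sum_k re (c k) * re (sp (q k) (m a)).
Proof. by rewrite (sp_suml Hsp) re_sum; apply: eq_bigr => k _; rewrite (spZl Hsp) reM. Qed.

Lemma det_pos P :
  0 < \det (map_mx (@re R) (\matrix_(i, a) sp (@eP _ _ sp e P i) (m a))).
Proof.
move: HmOR; rewrite HOR => -[_ [A1 [hA1 pA1]]].
case: HeOR => b [hb [A [pA hA]]].
move: hb; rewrite HOR => -[_ [A2 [hA2 pA2]]].
pose B0 : 'M[R]_3 := \matrix_(l, a) re (sp (b0 l) (m a)).
have h1 : map_mx (@re R) A1 *m B0 = 1%:M.
  apply/matrixP => j a; rewrite !mxE.
  transitivity (re (sp (m j) (m a))).
    by rewrite (hA1 j) rc_comb; apply: eq_bigr => l _; rewrite !mxE.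
  by rewrite Hmo re_nat.
have h2 : map_mx (@re R) (\matrix_(i, a) sp (@eP _ _ sp e P i) (m a)) =
    A *m (map_mx (@re R) A2 *m B0).
  apply/matrixP => j a; rewrite !mxE.
  rewrite (@rc_piV _ (\sum_k dR (A j k) *: reprV (piV (b k)))); last first.
    by rewrite (eP_pi Hsp Hmo Hms) hA.
  rewrite (re_sp_comb Hsp); apply: eq_bigr => k _; rewrite !mxE.
  rewrite (@rc_piV _ (b k)) ?reprVK // {1}(hA2 k) rc_comb.
  by congr (_ * _); apply: eq_bigr => l _; rewrite !mxE.
have h4 : \det (map_mx (@re R) A1) * \det B0 = 1 by rewrite -det_mulmx h1 det1.
have pB : 0 < \det B0 by rewrite -(pmulr_rgt0 _ pA1) h4 ltr01.
by rewrite h2 !det_mulmx; apply: mulr_gt0 => //; apply: mulr_gt0.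
Qed.

Lemma cross_eP P x y : cross sp m x y = cross sp (@eP _ _ sp e P) x y.
Proof.
rewrite (cross_change (eP_on Hsp Hmo Hms He P)) det_one ?scale1r //.
  exact: (eP_on Hsp Hmo Hms He P).
by rewrite re_det; apply: det_pos.
Qed.

End Orient.

Theorem proposition8 (R : realType) (M : lmodType (dual R))
  (sp : M -> M -> dual R) (OR : set ('I_3 -> M)) :
  free_rank3 M -> is_scalar_product sp -> is_orientation OR ->
  forall (m : 'I_3 -> M) (e : 'I_3 -> V M),
  pos_orthonormal sp OR m -> pos_orthonormal_V sp OR e ->
  [/\ forall x : M, is_so3 sp (ad sp m x),
      forall x1 x2 : M, ad sp m x1 =1 ad sp m x2 -> x1 = x2,
      forall f : M -> M, is_so3 sp f -> exists x : M, f =1 ad sp m x,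
      forall (a : dual R) (x1 x2 : M),
        ad sp m (a *: x1 + x2) =1 (fun y => a *: ad sp m x1 y + ad sp m x2 y) &
      forall x1 x2 : M,
        ad sp m (- cross sp m x1 x2) =1
          (fun y => ad sp m x1 (ad sp m x2 y) - ad sp m x2 (ad sp m x1 y))] /\
  [/\ forall z : M, is_screw sp e (beta sp z),
      forall z1 z2 : M, beta sp z1 =1 beta sp z2 -> z1 = z2,
      forall s : E sp -> V M, is_screw sp e s -> exists z : M, s =1 beta sp z,
      forall (r : R) (z1 z2 : M),
        beta sp (dR r *: z1 + z2) =1 (fun A => vadd (vscale r (beta sp z1 A)) (beta sp z2 A)) &
      forall z1 z2 : M,
        lie_bracket sp e (beta sp z1) (beta sp z2) (beta sp (- cross sp m z1 z2))].
Proof.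
move=> _ Hsp [b0 [_ HOR]] m e [HmOR Hmo] [He HeOR].
have Hms : forall x, exists c : 'I_3 -> dual R, x = \sum_i c i *: m i.
  by move: HmOR; rewrite HOR => -[[hs _] _].
split; split.
- by move=> x; split; [exact: (ad_lin Hsp Hmo Hms) | exact: (ad_antisym Hsp Hmo Hms)].
- exact: (ad_inj Hsp Hmo Hms).
- exact: (ad_surj Hsp Hmo Hms).
- exact: (ad_linx Hsp Hmo Hms).
- exact: (ad_jacobi Hsp Hmo Hms).
- exact: (beta_screw Hsp Hmo Hms He).
- exact: (beta_inj Hsp Hmo Hms He).
- exact: (beta_surj Hsp Hmo Hms He).
- exact: (beta_lin Hsp Hmo Hms He).
- move=> z1 z2; apply: (beta_bracket Hsp Hmo Hms He) => P x y.
  exact: (cross_eP Hsp Hmo Hms He HOR HmOR HeOR).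
Qed.
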